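(* Let $d$ and $p$ be integers with $d>p\ge 2$ and let \[ f_{d,p}(m)=\sum_{j=1}^{p}\binom{j+m-2}{j-1}\binom{d-j+m}{d-j}. \] Then every integer $k$ with $-\left\lfloor\frac{d-1}{2}\right\rfloor\le k\le -1$ is a root of $f_{d,p}$.
   Context: For an integer $a\ge 0$, $\binom{a+x}{a}$ denotes the polynomial $\prod_{i=1}^{a}(x+i)/a!$ in $x$; so $\binom{j+m-2}{j-1}=\prod_{i=0}^{j-2}(m+i)/(j-1)!$ and $\binom{d-j+m}{d-j}=\prod_{i=1}^{d-j}(m+i)/(d-j)!$. *)

(* Defs.v *)
From HB Require Import structures.
From mathcomp Require Import all_boot all_order all_algebra.
Set Implicit Arguments. Unset Strict Implicit. Unset Printing Implicit Defensive.
Import Order.TTheory GRing.Theory Num.Theory.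
Local Open Scope ring_scope.

(* binpoly a s = (1/a!) * prod_{i=0}^{a-1} (X + (s+i)), a polynomial in X over rat.
   With s = 0 this is binom(j+m-2, j-1) for a = j-1;
   with s = 1 this is binom(d-j+m, d-j) for a = d-j. *)
Definition binpoly (a s : nat) : {poly rat} :=
  (a`!%:R)^-1 *: \prod_(i < a) ('X + (s + i)%:R%:P).

Definition fdp (d p : nat) : {poly rat} :=
  \sum_(1 <= j < p.+1) binpoly (j - 1) 0 * binpoly (d - j) 1.

(* Main.v *)
Require Import Defs.
From HB Require Import structures.
From mathcomp Require Import all_boot all_order all_algebra.
From mathcomp Require Import zify.
Import Order.TTheory GRing.Theory Num.Theory.
Local Open Scope ring_scope.

Lemma binpoly_root (a s n : nat) : (s <= n)%N -> (n < s + a)%N ->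
  root (binpoly a s) (- (n%:R)).
Proof.
move=> h1 h2; have ha : (n - s < a)%N by lia.
rewrite /root /binpoly hornerZ horner_prod; apply/eqP.
rewrite (bigD1 (Ordinal ha)) //= hornerD hornerX hornerC subnKC //.
by rewrite addNr mul0r mulr0.
Qed.

Theorem theorem2p7 (d p : nat) (hp : (2 <= p)%N) (hdp : (p < d)%N) (k : int)
  (hk1 : - (((d - 1) %/ 2)%N)%:Z <= k) (hk2 : k <= -1) :
  root (fdp d p) (k%:~R).
Proof.
case: k hk1 hk2 => [n|n] // hk1 _.
have hn : (n.+1 <= (d - 1) %/ 2)%N.
  by move: hk1; rewrite NegzE lerN2 lez_nat.
have -> : (Negz n)%:~R = - ((n.+1)%:R : rat) by rewrite NegzE mulrNz.
rewrite /root /fdp horner_sum big_nat; apply/eqP; apply: big1 => j /andP[hj1 hj2].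
rewrite hornerM.
have hd : (2 * n.+1 <= d - 1)%N.
  by move: hn; rewrite leq_divRL //; lia.
case: (leqP j (d - n.+1)) => hj.
  have h1 : (1 <= n.+1)%N by lia.
  have h2 : (n.+1 < 1 + (d - j))%N by lia.
  by rewrite (eqP (binpoly_root _ _ _ h1 h2)) mulr0.
have h1 : (0 <= n.+1)%N by lia.
have h2 : (n.+1 < 0 + (j - 1))%N by lia.
by rewrite (eqP (binpoly_root _ _ _ h1 h2)) mul0r.
Qed.
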